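(* Let $G$ be a finite GVZ-group with $|\mathrm{cd}(G)|=2$, and let $N$ be a normal subgroup of $G$ with $G'\not\subseteq N$. Let $\chi\in\mathrm{Irr}(G/N)$, regarded as an irreducible character of $G$ with $N\subseteq\ker\chi$. Then $\chi$ is non-linear if and only if $N[Z(\chi),G]$ is a proper subgroup of $NG'$.
   Context: All groups are finite. $\mathrm{Irr}(G)$ is the set of complex irreducible characters of $G$ and $\mathrm{cd}(G)=\{\chi(1):\chi\in\mathrm{Irr}(G)\}$. For a character $\chi$, $Z(\chi)=\{g\in G: |\chi(g)|=\chi(1)\}$. A nonabelian group $G$ is a GVZ-group if for every $\chi\in\mathrm{Irr}(G)$ we have $\chi(g)=0$ for all $g\in G\setminus Z(\chi)$. *)

(* Defs.v *)
From mathcomp Require Import all_boot all_order all_algebra all_fingroup all_solvable all_field all_character.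
Set Implicit Arguments. Unset Strict Implicit. Unset Printing Implicit Defensive.
Import GRing.Theory Num.Theory.
Local Open Scope ring_scope.

Definition cd (gT : finGroupType) (G : {group gT}) : seq algC :=
  undup [seq 'chi[G]_i 1%g | i : Iirr G].

Definition GVZ (gT : finGroupType) (G : {group gT}) : Prop :=
  ~~ abelian G /\
  forall (i : Iirr G) (g : gT), g \in G -> g \notin ('Z('chi[G]_i))%CF ->
    'chi[G]_i g = 0.

(* Main.v *)
Require Import Defs.
From mathcomp Require Import all_boot all_order all_algebra all_fingroup all_solvable all_field all_character.
Import GRing.Theory Num.Theory.
Local Open Scope ring_scope.

Theorem mainTheorem2 (gT : finGroupType) (G N : {group gT}) (i : Iirr G) :
  GVZ G -> size (cd G) = 2%N ->
  (N <| G)%g -> ~~ (G^`(1) \subset N)%g ->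
  (N \subset cfker 'chi[G]_i)%g ->
  ('chi[G]_i 1%g != 1) =
  ((N * [~: ('Z('chi[G]_i))%CF, G]) \proper (N * G^`(1)))%g.
Proof.
move=> _ _ nNG _ NK.
have Kn := cfker_normal 'chi[G]_i.
have ZK : ([~: ('Z('chi[G]_i))%CF, G] \subset cfker 'chi[G]_i)%g.
  have nKG := normal_norm Kn.
  rewrite -quotient_cents2 //; last exact: subset_trans (cfcenter_sub _) nKG.
  apply: subset_trans (cfcenter_subset_center 'chi[G]_i) _.
  exact: subsetIr.
have lin1 : ('chi[G]_i 1%g == 1) = (G^`(1) \subset cfker 'chi[G]_i)%g.
  by rewrite -lin_irr_der1 qualifE /= irr_char.
case: (boolP ('chi[G]_i 1%g == 1)) => H1 /=.
  have ZG : ('Z('chi[G]_i))%CF = G.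
    apply/eqP; rewrite eqEsubset cfcenter_sub /=; apply/subsetP => x Gx.
    have lin : 'chi[G]_i \is a linear_char by rewrite qualifE /= irr_char.
    by rewrite irr_cfcenterE // normC_lin_char // lin_char1.
  by rewrite ZG properxx.
rewrite properE mulgS ?commgSS ?cfcenter_sub //=.
apply/esym/negP => sub.
move: H1; rewrite lin1 => /negP; apply.
apply: subset_trans (mulG_subr N _) _.
apply: subset_trans sub _.
by rewrite mul_subG.
Qed.
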